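(* In the bug bounty model described in the context, $nF(\hat c_n^* )\to\hat\kappa^*$ as $n\to\infty$, where $\hat c_n^*=\min\{\tilde c_n,c_{a,n}(\overline v)\}$ is the optimal equilibrium threshold of the private program with $n$ agents and $\hat\kappa^*=\min\{\tilde\kappa,\kappa_a(\overline v)\}$ is the optimal asymptotic participation of the public program.
   Context: There are $L$ potential organic bugs; bug $l$ exists with probability $\mu^l\in(0,1]$ (independently), has complexity $q^l\in(0,1]$, and the designer values finding it at $w^l\ge0$. Agents' costs are i.i.d. from a fixed continuous distribution $F$ with full support $[\underline c,\overline c]$, $0<\underline c<\overline c\le\infty$, finite density $f$, $F/f$ non-decreasing. Budget $\overline v>0$ with $\overline v\ge\underline c$; $\sum_lw^l\mu^lq^l\ge\underline c$. A searching agent finds each existing bug of complexity $q$ with probability $q$, independently; a found bug's prize goes to one of its finders chosen uniformly at random. With $n$ agents, $\Phi_n(\hat c;q)$ is the probability that a searching agent wins the prize of an existing bug of complexity $q$ when each of the other $n-1$ agents searches iff his/her cost is at most $\hat c$. $\tilde c_n$ is the unique fixed point of $\Omega_n(\hat c)=\sum_lw^l\mu^lq^l(1-q^lF(\hat c))^{n-1}-F(\hat c)/f(\hat c)$, and $c_{a,n}(\overline v)$ is the unique fixed point of $\hat c\mapsto\overline v\Phi_n(\hat c;1)$. $\tilde\kappa$ is the unique root in $[0,\infty)$ of $\sum_lw^l\mu^lq^le^{-q^l\hat\kappa}-\underline c$, and $\kappa_a(\overline v)$ is the largest fixed point in $[0,\infty)$ of $\hat\kappa\mapsto\overline v(1-e^{-\hat\kappa})/\underline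 c$. *)

(* Defs.v *)
From Stdlib Require Import Reals List.
From Coquelicot Require Import Coquelicot.
Open Scope R_scope.

Definition sumL (n : nat) (g : nat -> R) : R :=
  fold_right (fun k acc => g k + acc) 0 (seq 0 n).

(* Phi n F c qq : probability that a searching agent wins the prize of an
   existing bug of complexity qq, when each of the other n-1 agents searches
   iff his cost is at most c (costs i.i.d. with cdf F).  The agent finds the bug
   with prob. qq; each other agent independently searches and finds it with
   prob. p = qq * F c; with K ~ Bin(n-1, p) other finders, the prize goes to
   the agent with probability 1/(K+1). *)
Definition Phi (n : nat) (F : R -> R) (c qq : R) : R :=
  let p := qq * F c in
  qq * sumL n (fun k =>
     Binomial.C (n - 1) k * p ^ k * (1 - p) ^ (n - 1 - k) / INR (k + 1)).

Definition Omega (L : nat) (w mu q : nat -> R) (F f : R -> R) (n : nat) (c : R)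
  : R :=
  sumL L (fun l => w l * mu l * q l * (1 - q l * F c) ^ (n - 1)) - F c / f c.

Definition in_supp (c_lo : R) (c_hi : Rbar) (x : R) : Prop :=
  c_lo <= x /\ Rbar_le (Finite x) c_hi.

(* Main.v *)
Require Import Defs.
From Stdlib Require Import Reals List.
From Coquelicot Require Import Coquelicot.
From Stdlib Require Import Lra Lia Psatz Classical ClassicalEpsilon ZArith.
Open Scope R_scope.

Lemma sumL_S n g : sumL (S n) g = sumL n g + g n.
Proof.
  unfold sumL. rewrite List.seq_S, fold_right_app. simpl.
  generalize (g n). intro r.
  induction (List.seq 0 n) as [|x s IH]; simpl; [lra|]. rewrite IH. lra.
Qed.

Lemma sumL_0 g : sumL 0 g = 0.
Proof. reflexivity. Qed.

Lemma sumL_ext n g h : (forall k, (k < n)%nat -> g k = h k) -> sumL n g = sumL n h.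
Proof.
  induction n; intros H; [reflexivity|]. rewrite !sumL_S, IHn by (intros; apply H; lia).
  rewrite H by lia. reflexivity.
Qed.

Lemma sumL_le n g h : (forall k, (k < n)%nat -> g k <= h k) -> sumL n g <= sumL n h.
Proof.
  induction n; intros H; [rewrite !sumL_0; lra|]. rewrite !sumL_S.
  assert (sumL n g <= sumL n h) by (apply IHn; intros; apply H; lia).
  specialize (H n ltac:(lia)). lra.
Qed.

Lemma sumL_lt n g h : (forall k, (k < n)%nat -> g k <= h k) ->
  (exists k, (k < n)%nat /\ g k < h k) -> sumL n g < sumL n h.
Proof.
  induction n; intros H [k [Hk Hlt]]; [lia|]. rewrite !sumL_S.
  destruct (Nat.eq_dec k n) as [->|Hne].
  - assert (sumL n g <= sumL n h) by (apply sumL_le; intros; apply H; lia). lra.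
  - assert (sumL n g < sumL n h) by (apply IHn; [intros; apply H; lia| exists k; split; [lia|auto]]).
    specialize (H n ltac:(lia)). lra.
Qed.

Lemma sumL_plus n g h : sumL n (fun k => g k + h k) = sumL n g + sumL n h.
Proof. induction n; [rewrite !sumL_0; lra|]. rewrite !sumL_S, IHn. lra. Qed.

Lemma sumL_scal n c g : sumL n (fun k => c * g k) = c * sumL n g.
Proof. induction n; [rewrite !sumL_0; lra|]. rewrite !sumL_S, IHn. lra. Qed.

Lemma sumL_sum_f n g : sumL (S n) g = sum_f_R0 g n.
Proof. induction n. - rewrite sumL_S, sumL_0. simpl. lra. - rewrite sumL_S, IHn. simpl. lra. Qed.

Lemma sumL_zero n : sumL n (fun _ => 0) = 0.
Proof. induction n; [reflexivity|]. rewrite sumL_S, IHn. lra. Qed.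

Lemma sumL_pos_ex n g : 0 < sumL n g -> exists k, (k < n)%nat /\ 0 < g k.
Proof.
  intros H. apply NNPP. intros Hn.
  assert (sumL n g <= sumL n (fun _ => 0)).
  { apply sumL_le. intros k Hk. apply Rnot_lt_le. intros Hg. apply Hn. exists k; auto. }
  rewrite sumL_zero in H0. lra.
Qed.

Lemma exp_lb t : 1 - t <= exp (- t).
Proof. pose proof (exp_ineq1_le (-t)). lra. Qed.

Lemma exp_ub t : 0 <= t -> exp (- t) - (1 - t) <= t * t.
Proof.
  intros Ht. pose proof (exp_ineq1_le t).
  assert (exp (-t) = / exp t) by (rewrite exp_Ropp; reflexivity).
  assert (exp (-t) <= / (1 + t)).
  { rewrite H0. apply Rinv_le_contravar; lra. }
  assert (/ (1+t) - (1 - t) = t * t / (1 + t)) by (field; lra).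
  assert (t * t / (1 + t) <= t * t).
  { unfold Rdiv. rewrite <- (Rmult_1_r (t*t)) at 2. apply Rmult_le_compat_l; [nra|].
    rewrite <- Rinv_1. apply Rinv_le_contravar; lra. }
  lra.
Qed.

Lemma pow_le1 y m : 0 <= y <= 1 -> 0 <= y ^ m <= 1.
Proof. intros H. induction m; simpl; [lra|]. split; [nra|]. nra. Qed.

Lemma pow_diff_le x y m : 0 <= y -> y <= x -> x <= 1 -> x ^ m - y ^ m <= INR m * (x - y).
Proof.
  intros Hy Hyx Hx. induction m.
  - simpl. lra.
  - rewrite S_INR. simpl.
    pose proof (pow_le1 y m ltac:(lra)). pose proof (pow_le1 x m ltac:(lra)).
    assert (y ^ m <= x ^ m) by (apply pow_incr; lra).
    assert (x * x ^ m - y * y ^ m = x * (x^m - y^m) + y^m * (x - y)) by ring.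
    assert (x * (x^m - y^m) <= x^m - y^m) by nra.
    assert (y^m * (x - y) <= x - y) by nra.
    lra.
Qed.

Lemma exp_pow_n t m : exp (- t) ^ m = exp (- (INR m * t)).
Proof.
  induction m. - simpl. rewrite Rmult_0_l, Ropp_0, exp_0. reflexivity.
  - rewrite S_INR. simpl. rewrite IHm, <- exp_plus. f_equal. ring.
Qed.

Lemma exp_le x y : x <= y -> exp x <= exp y.
Proof. intros [H|H]; [left; apply exp_increasing; auto| subst; lra]. Qed.

Lemma exp_neg_le1 t : 0 <= t -> exp (- t) <= 1.
Proof. intros. rewrite <- exp_0. apply exp_le. lra. Qed.

Lemma pow_exp_bounds t m : 0 <= t <= 1 ->
  exp (- (INR m * t)) - INR m * (t * t) <= (1 - t) ^ m <= exp (- (INR m * t)).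
Proof.
  intros Ht. rewrite <- exp_pow_n. pose proof (exp_neg_le1 t ltac:(lra)).
  pose proof (exp_lb t). split.
  - pose proof (pow_diff_le (exp (-t)) (1 - t) m ltac:(lra) ltac:(lra) ltac:(lra)).
    pose proof (exp_ub t ltac:(lra)). pose proof (pos_INR m).
    assert (INR m * (exp (- t) - (1 - t)) <= INR m * (t * t)) by (apply Rmult_le_compat_l; lra).
    lra.
  - apply pow_incr. lra.
Qed.

Lemma C_succ m k : (k <= m)%nat ->
  INR (S m) * Binomial.C m k / INR (k + 1) = Binomial.C (S m) (S k).
Proof.
  intros Hk. unfold Binomial.C.
  replace (S m - S k)%nat with (m - k)%nat by lia.
  replace (k+1)%nat with (S k) by lia.
  rewrite (fact_simpl m), (fact_simpl k), !mult_INR.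
  pose proof (INR_fact_neq_0 m). pose proof (INR_fact_neq_0 k).
  pose proof (INR_fact_neq_0 (m - k)).
  assert (INR (S k) <> 0) by (apply not_0_INR; lia).
  field. repeat split; auto.
Qed.

Lemma Phi_id n F c : (1 <= n)%nat ->
  INR n * F c * Phi n F c 1 = 1 - (1 - F c) ^ n.
Proof.
  intros Hn. destruct n as [|m]; [lia|]. unfold Phi.
  set (p := 1 * F c). replace (F c) with p by (unfold p; ring).
  rewrite sumL_sum_f. replace (S m - 1)%nat with m by lia.
  pose proof (binomial p (1 - p) (S m)) as Hb.
  replace (p + (1 - p)) with 1 in Hb by ring. rewrite pow1 in Hb.
  rewrite decomp_sum in Hb by lia. simpl Init.Nat.pred in Hb.
  replace (Binomial.C (S m) 0 * p ^ 0 * (1 - p) ^ (S m - 0)) with ((1-p)^(S m)) in Hb.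
  2:{ unfold Binomial.C. rewrite Nat.sub_0_r. simpl (p ^ 0). 
      replace (INR (Factorial.fact 0)) with 1 by reflexivity.
      field. apply INR_fact_neq_0. }
  assert (Hs : INR (S m) * p * (1 * sum_f_R0
     (fun k => Binomial.C m k * p ^ k * (1 - p) ^ (m - k) / INR (k + 1)) m)
     = sum_f_R0 (fun i => Binomial.C (S m) (S i) * p ^ S i * (1 - p) ^ (S m - S i)) m).
  { rewrite Rmult_1_l, scal_sum. apply sum_eq.
    intros i Hi. rewrite <- C_succ by lia. simpl (S m - S i)%nat. simpl (p ^ S i). field.
    apply not_0_INR; lia. }
  rewrite Hs. lra.
Qed.

Lemma sum_f_first g m : (forall i, (1 <= i)%nat -> g i = 0) -> sum_f_R0 g m = g 0%nat.
Proof. intros H. induction m; simpl; [reflexivity|]. rewrite IHm, (H (S m)) by lia. ring. Qed.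

Lemma Phi_zero n F c : (1 <= n)%nat -> F c = 0 -> Phi n F c 1 = 1.
Proof.
  intros Hn H0. destruct n as [|m]; [lia|]. unfold Phi. rewrite sumL_sum_f.
  rewrite sum_f_first.
  - rewrite H0. unfold Binomial.C. rewrite !Nat.sub_0_r. rewrite Rmult_0_r, Rminus_0_r, pow1.
    replace (INR (Factorial.fact 0)) with 1 by reflexivity. simpl.
    field. apply INR_fact_neq_0.
  - intros i Hi. destruct i; [lia|]. rewrite H0. rewrite Rmult_0_r. simpl. rewrite Rmult_0_l. unfold Rdiv. ring.
Qed.

Lemma supp_conv (a : R) (ch : Rbar) x y t : in_supp a ch x -> in_supp a ch y -> x <= t <= y -> in_supp a ch t.
Proof.
  intros [Hx1 Hx2] [Hy1 Hy2] Ht. split; [lra|].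
  apply Rbar_le_trans with (Finite y); [simpl; lra|auto].
Qed.

Lemma supp_a (a : R) (ch : Rbar) : Rbar_lt a ch -> in_supp a ch a.
Proof. intros H. unfold in_supp. split; [apply Rle_refl| apply Rbar_lt_le; exact H]. Qed.

Lemma F_at_a (a : R) (ch : Rbar) F f : Rbar_lt a ch -> (forall x, in_supp a ch x -> is_RInt f a x (F x)) -> F a = 0.
Proof.
  intros Hch HF. pose proof (HF a (supp_a a ch Hch)) as H1.
  pose proof (is_RInt_point f a) as H2.
  apply (is_RInt_unique (V := R_CompleteNormedModule)) in H1.
  apply (is_RInt_unique (V := R_CompleteNormedModule)) in H2. rewrite <- H1, H2. reflexivity.
Qed.

Lemma F_diff (a : R) (ch : Rbar) F f : Rbar_lt a ch -> (forall x, in_supp a ch x -> is_RInt f a x (F x)) ->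
  forall x y, in_supp a ch x -> in_supp a ch y -> x <= y -> is_RInt f x y (F y - F x).
Proof.
  intros Hch HF x y Hx Hy Hxy. pose proof (F_at_a a ch F f Hch HF) as Ha.
  destruct Hxy as [Hxy| <-].
  - destruct (proj1 Hx) as [Hax| <-].
    + pose proof (is_RInt_Chasles_2 f a x y (F y) (F x) ltac:(lra) (HF y Hy) (HF x Hx)) as H.
      exact H.
    + rewrite Ha, Rminus_0_r. apply HF; auto.
  - replace (F x - F x) with (@zero R_NormedModule) by (simpl; unfold zero; simpl; ring).
    apply is_RInt_point.
Qed.

Lemma F_mono (a : R) (ch : Rbar) F f : Rbar_lt a ch -> (forall x, in_supp a ch x -> is_RInt f a x (F x)) ->
  (forall x, in_supp a ch x -> 0 < f x) ->
  forall x y, in_supp a ch x -> in_supp a ch y -> x <= y -> F x <= F y.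
Proof.
  intros Hch HF Hf x y Hx Hy Hxy. pose proof (F_diff a ch F f Hch HF x y Hx Hy Hxy) as H.
  assert (0 <= F y - F x); [|lra].
  apply (is_RInt_ge_0 f x y); auto. intros t Ht. left. apply Hf.
  apply (supp_conv a ch x y t); auto; lra.
Qed.

Lemma F_nonneg (a : R) (ch : Rbar) F f : Rbar_lt a ch -> (forall x, in_supp a ch x -> is_RInt f a x (F x)) ->
  (forall x, in_supp a ch x -> 0 < f x) ->
  forall x, in_supp a ch x -> 0 <= F x.
Proof.
  intros Hch HF Hf x Hx. rewrite <- (F_at_a a ch F f Hch HF).
  apply (F_mono a ch F f); auto. apply supp_a; auto. apply Hx.
Qed.

Lemma ball_R (b d y : R) : Rabs (y - b) < d -> ball b d y.
Proof. intros H. unfold ball; simpl; unfold AbsRing_ball, abs, minus, plus, opp; simpl. exact H. Qed.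

Lemma F_le1 (a : R) (ch : Rbar) F f : Rbar_lt a ch -> (forall x, in_supp a ch x -> is_RInt f a x (F x)) ->
  (forall x, in_supp a ch x -> 0 < f x) -> is_lim F ch 1 ->
  forall x, in_supp a ch x -> F x <= 1.
Proof.
  intros Hch HF Hf Hlim.
  assert (Step1 : forall x, in_supp a ch x -> Rbar_lt x ch -> F x <= 1).
  { intros x Hx Hxc. apply Rnot_lt_le. intros Hgt.
    apply is_lim_spec in Hlim. specialize (Hlim (mkposreal _ (Rlt_Rminus _ _ Hgt))).
    simpl in Hlim. destruct ch as [b| |]; simpl in *.
    - destruct Hlim as [d Hd].
      set (y := Rmax x (b - d / 2)).
      assert (Hy1 : x <= y) by apply Rmax_l.
      assert (Hy2 : y < b) by (unfold y; apply Rmax_lub_lt; destruct d; simpl in *; lra).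
      assert (Hy3 : b - d/2 <= y) by apply Rmax_r.
      assert (Hys : in_supp a b y) by (split; [destruct Hx; lra| simpl; lra]).
      specialize (Hd y (ball_R b d y ltac:(destruct d; simpl in *; apply Rabs_def1; lra)) ltac:(lra)).
      pose proof (F_mono a b F f Hch HF Hf x y Hx Hys Hy1).
      apply Rabs_def2 in Hd. lra.
    - destruct Hlim as [M HM].
      set (y := Rmax x M + 1).
      assert (x < y) by (unfold y; pose proof (Rmax_l x M); lra).
      assert (M < y) by (unfold y; pose proof (Rmax_r x M); lra).
      assert (Hys : in_supp a p_infty y) by (split; [destruct Hx; lra| simpl; auto]).
      specialize (HM y ltac:(lra)).
      pose proof (F_mono a p_infty F f Hch HF Hf x y Hx Hys ltac:(lra)).
      apply Rabs_def2 in HM. lra.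
    - destruct Hx as [_ Hx]. simpl in Hx. contradiction. }
  intros x Hx. destruct ch as [b| |].
  2: { apply Step1; simpl; auto. }
  2: { destruct Hx as [_ Hx]; simpl in Hx; contradiction. }
  destruct Hx as [Hx1 Hx2]. simpl in Hx2. destruct Hx2 as [Hxb| ->].
  { apply Step1; [split; simpl; lra| simpl; lra]. }
  simpl in Hch.
  apply Rnot_lt_le. intros Hgt. set (d := F b - 1).
  assert (Hex : ex_RInt f a b) by (exists (F b); apply HF; split; simpl; lra).
  destruct (ex_RInt_ub f a b Hex) as [M HM].
  assert (HM' : forall t, a <= t <= b -> f t <= M).
  { intros t Ht. specialize (HM t). rewrite Rmin_left, Rmax_right in HM by lra.
    specialize (HM Ht). unfold norm in HM; simpl in HM; unfold abs in HM; simpl in HM.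
    pose proof (Rle_abs (f t)). lra. }
  assert (HM0 : 0 <= M) by (pose proof (HM' b ltac:(lra)); pose proof (Hf b ltac:(split; simpl; lra)); lra).
  set (y := Rmax ((a + b)/2) (b - d / (2 * (M + 1)))).
  assert (Hd0 : 0 < d / (2 * (M+1))) by (unfold Rdiv; apply Rmult_lt_0_compat; [unfold d; lra| apply Rinv_0_lt_compat; lra]).
  assert (Hy1 : (a+b)/2 <= y) by apply Rmax_l.
  assert (Hy2 : b - d / (2 * (M+1)) <= y) by apply Rmax_r.
  assert (Hy3 : y < b) by (unfold y; apply Rmax_lub_lt; lra).
  assert (Hys : in_supp a b y) by (split; simpl; lra).
  pose proof (Step1 y Hys ltac:(simpl; lra)) as Hy1'.
  pose proof (F_diff a b F f Hch HF y b Hys ltac:(split; simpl; lra) ltac:(lra)) as Hd.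
  pose proof (is_RInt_const y b M) as Hc.
  assert (F b - F y <= scal (b - y) M).
  { apply (is_RInt_le f (fun _ => M) y b); auto; [lra|]. intros t Ht. apply HM'. lra. }
  unfold scal in H; simpl in H; unfold mult in H; simpl in H.
  assert ((b - y) * M <= d / (2 * (M+1)) * M) by (apply Rmult_le_compat_r; lra).
  assert (d / (2 * (M+1)) * M <= d / 2).
  { unfold Rdiv. rewrite Rinv_mult. 
    assert (/ (M+1) * M <= 1).
    { apply (Rmult_le_reg_l (M+1)); [lra|]. rewrite <- Rmult_assoc, Rinv_r by lra. lra. }
    assert (0 < d * /2) by (unfold d; lra). nra. }
  unfold d in *; lra.
Qed.

Lemma RInt_approx (f : R -> R) u v I : u < v -> is_RInt f u v I ->
  forall eps, 0 < eps -> exists d : posreal, forall ptd,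
    pointed_subdiv ptd -> SF_h ptd = u -> seq.last (SF_h ptd) (SF_lx ptd) = v ->
    seq_step (SF_lx ptd) < d -> Rabs (Riemann_sum f ptd - I) < eps.
Proof.
  intros Huv H eps Heps.
  specialize (H (ball I (mkposreal eps Heps)) (locally_ball I (mkposreal eps Heps))).
  destruct H as [d Hd]. exists d. intros ptd H1 H2 H3 H4.
  specialize (Hd ptd H4). simpl in Hd.
  rewrite Rmin_left, Rmax_right in Hd by lra.
  specialize (Hd (conj H1 (conj H2 H3))).
  rewrite sign_eq_1 in Hd by lra. 
  unfold ball in Hd; simpl in Hd; unfold AbsRing_ball, abs, minus, plus, opp in Hd; simpl in Hd.
  unfold scal in Hd; simpl in Hd; unfold mult in Hd; simpl in Hd. rewrite Rmult_1_l in Hd. exact Hd.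
Qed.

Fixpoint psum (f : R -> R) (T : R -> R -> R) (x0 : R) (l : list R) : R :=
  match l with nil => 0 | y :: r => (y - x0) * f (T x0 y) + psum f T y r end.

Lemma RS_f2 f T x0 l : Riemann_sum f (SF_seq_f2 T (x0 :: l)) = psum f T x0 l.
Proof.
  revert x0. induction l as [|y r IH]; intros x0.
  - reflexivity.
  - rewrite SF_cons_f2 by (simpl; lia). rewrite Riemann_sum_cons. rewrite IH.
    simpl. reflexivity.
Qed.

Fixpoint good (u v x0 : R) (l : list R) : Prop :=
  match l with nil => True | y :: r => u <= x0 <= y /\ y <= v /\ good u v y r end.

Lemma psum_lb f T u v eta : (forall x y, u <= x <= y -> y <= v -> (y - x) * eta <= (y - x) * f (T x y)) ->
  forall l x0, good u v x0 l -> eta * (seq.last x0 l - x0) <= psum f T x0 l.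
Proof.
  intros HT. induction l as [|y r IH]; intros x0 Hg.
  - simpl. lra.
  - simpl in Hg |- *. destruct Hg as [H1 [H2 H3]]. specialize (IH y H3).
    specialize (HT x0 y H1 H2). lra.
Qed.

Lemma good_iota u v (g : nat -> R) : (forall i, g i <= g (S i)) ->
  forall m s, (forall i, (s <= i <= s + m)%nat -> u <= g i <= v) ->
  good u v (g s) (seq.map g (seq.iota (S s) m)).
Proof.
  intros Hg. induction m; intros s Hs; simpl; auto.
  split; [split; [apply (Hs s); lia| apply Hg]|]. split; [apply (Hs (S s)); lia|].
  apply IHm. intros i Hi. apply Hs. lia.
Qed.

Lemma step_lemma (f : R -> R) u v eta : u < v -> is_RInt f u v 0 -> 0 < eta ->
  exists x y, u <= x /\ x < y /\ y <= v /\ forall t, x <= t <= y -> f t < eta.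
Proof.
  intros Huv HI Heta. apply NNPP. intros Hn.
  assert (HH : forall x y, u <= x -> x < y -> y <= v -> exists t, x <= t <= y /\ eta <= f t).
  { intros x y Hx1 Hx2 Hx3. apply NNPP. intros Hn2. apply Hn. exists x, y. split; [|split; [|split]]; auto.
    intros t Ht. apply Rnot_le_lt. intros Hle. apply Hn2. exists t; auto. }
  set (T := fun x y => match excluded_middle_informative (exists t, x <= t <= y /\ eta <= f t) with
        | left e => proj1_sig (constructive_indefinite_description _ e) | right _ => x end).
  assert (T1 : forall x y, x <= y -> x <= T x y <= y).
  { intros x y Hxy. unfold T. destruct excluded_middle_informative as [e|e]; [|lra].
    destruct (constructive_indefinite_description _ e) as [t Ht]. simpl. apply Ht. }
  assert (T2 : forall x y, u <= x < y -> y <= v -> eta <= f (T x y)).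
  { intros x y Hxy Hyv. unfold T. destruct excluded_middle_informative as [e|e].
    - destruct (constructive_indefinite_description _ e) as [t Ht]. simpl. apply Ht.
    - exfalso. apply e. apply HH; lra. }
  assert (HT : forall x y, u <= x <= y -> y <= v -> (y - x) * eta <= (y - x) * f (T x y)).
  { intros x y Hxy Hyv. destruct (Req_dec x y) as [->|Hne]; [lra|].
    apply Rmult_le_compat_l; [lra|]. apply T2; lra. }
  destruct (RInt_approx f u v 0 Huv HI (eta * (v - u) / 2)) as [d Hd].
  { apply Rmult_lt_0_compat; [|lra]. apply Rmult_lt_0_compat; lra. }
  destruct (seq_step_unif_part_ex u v d) as [n Hn'].
  destruct (Riemann_fine_unif_part T u v n T1 ltac:(lra)) as [_ [Hp [Hh Hl]]].
  assert (Hsz : (0 < seq.size (unif_part u v n))%nat).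
  { unfold unif_part. rewrite seq.size_mkseq. lia. }
  specialize (Hd _ Hp Hh Hl). rewrite SF_lx_f2 in Hd by exact Hsz. specialize (Hd Hn').
  set (g := fun i : nat => u + INR i * (v - u) / (INR n + 1)) in *.
  assert (Hu : unif_part u v n = g 0%nat :: seq.map g (seq.iota 1 (S n))) by reflexivity.
  rewrite Hu in Hd, Hl. rewrite RS_f2 in Hd.
  rewrite SF_lx_f2 in Hl by (simpl; lia). simpl in Hl.
  assert (Hg0 : g 0%nat = u) by (unfold g; simpl; field; pose proof (pos_INR n); lra).
  assert (Hgood : good u v (g 0%nat) (seq.map g (seq.iota 1 (S n)))).
  { apply good_iota.
    - intros i. unfold g. rewrite S_INR. pose proof (pos_INR n).
      assert (0 <= (v - u) / (INR n + 1)) by (apply Rdiv_le_0_compat; lra).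
      unfold Rdiv in *. nra.
    - intros i Hi. unfold g. pose proof (pos_INR n). pose proof (pos_INR i).
      assert (INR i <= INR n + 1) by (rewrite <- S_INR; apply le_INR; lia).
      assert (0 <= INR i * (v - u) / (INR n + 1) <= v - u).
      { split. - apply Rdiv_le_0_compat; [apply Rmult_le_pos|]; lra.
        - apply (Rmult_le_reg_r (INR n + 1)); [lra|]. unfold Rdiv.
          rewrite Rmult_assoc, Rinv_l by lra. nra. }
      lra. }
  pose proof (psum_lb f T u v eta HT _ _ Hgood) as Hlb.
  replace (seq.last (g 0%nat) (seq.map g (seq.iota 1 (S n)))) with v in Hlb by (rewrite <- Hl; reflexivity).
  rewrite Hg0 in Hd, Hlb.
  apply Rabs_def2 in Hd. destruct Hd as [Hd1 Hd2].
  assert (0 < eta * (v - u)) by (apply Rmult_lt_0_compat; lra). lra.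
Qed.

Lemma F_pos (a : R) (ch : Rbar) F f : Rbar_lt a ch -> (forall x, in_supp a ch x -> is_RInt f a x (F x)) ->
  (forall x, in_supp a ch x -> 0 < f x) ->
  forall x, in_supp a ch x -> a < x -> 0 < F x.
Proof.
  intros Hch HF Hf x Hx Hax. apply Rnot_le_lt. intros HFx.
  pose proof (F_nonneg a ch F f Hch HF Hf) as Fnn.
  assert (HS : forall s, a <= s <= x -> in_supp a ch s).
  { intros s Hs. apply (supp_conv a ch a x s); auto. apply supp_a; auto. }
  assert (HZ : forall u v, a <= u -> u < v -> v <= x -> is_RInt f u v 0).
  { intros u v H1 H2 H3.
    assert (Fu : F u = 0).
    { pose proof (F_mono a ch F f Hch HF Hf u x (HS u ltac:(lra)) Hx ltac:(lra)).
      pose proof (Fnn u (HS u ltac:(lra))). lra. }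
    assert (Fv : F v = 0).
    { pose proof (F_mono a ch F f Hch HF Hf v x (HS v ltac:(lra)) Hx ltac:(lra)).
      pose proof (Fnn v (HS v ltac:(lra))). lra. }
    pose proof (F_diff a ch F f Hch HF u v (HS u ltac:(lra)) (HS v ltac:(lra)) ltac:(lra)) as H.
    rewrite Fu, Fv, Rminus_0_r in H. exact H. }
  set (P := fun p : R * R => a <= fst p /\ fst p < snd p /\ snd p <= x).
  set (Q := fun (k : nat) (p p' : R * R) => P p' /\ fst p <= fst p' /\ snd p' <= snd p /\
            forall t, fst p' <= t <= snd p' -> f t < / (INR k + 1)).
  assert (HQ : forall k p, P p -> exists p', Q k p p').
  { intros k p [H1 [H2 H3]].
    destruct (step_lemma f (fst p) (snd p) (/ (INR k + 1)) H2 (HZ _ _ H1 H2 H3)) as [u [v [Hu1 [Hu2 [Hu3 Hu4]]]]].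
    { apply Rinv_0_lt_compat. pose proof (pos_INR k). lra. }
    exists (u, v). unfold Q, P; simpl. repeat split; try lra. exact Hu4. }
  set (nxt := fun k p => match excluded_middle_informative (exists p', Q k p p') with
     | left e => proj1_sig (constructive_indefinite_description _ e) | right _ => p end).
  assert (Hnxt : forall k p, P p -> Q k p (nxt k p)).
  { intros k p Hp. unfold nxt. destruct excluded_middle_informative as [e|e].
    - destruct (constructive_indefinite_description _ e) as [p' Hp']. simpl. exact Hp'.
    - exfalso. apply e. apply HQ. exact Hp. }
  set (sq := fix sq (k : nat) : R * R := match k with O => (a, x) | S k => nxt k (sq k) end).
  assert (HP : forall k, P (sq k)).
  { induction k. - unfold P; simpl; lra. - simpl. apply (Hnxt k (sq k) IHk). }
  assert (HQk : forall k, Q k (sq k) (sq (S k))).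
  { intros k. simpl. apply Hnxt. apply HP. }
  assert (Mono : forall j k, (j <= k)%nat -> fst (sq j) <= fst (sq k) /\ snd (sq k) <= snd (sq j)).
  { intros j k Hjk. induction Hjk; [lra|]. destruct (HQk m) as [_ [Q1 [Q2 _]]]. lra. }
  assert (Cross : forall j k, fst (sq j) <= snd (sq k)).
  { intros j k. destruct (Nat.le_ge_cases j k) as [Hjk|Hjk].
    - destruct (Mono j k Hjk). destruct (HP k) as [_ [? _]]. lra.
    - destruct (Mono k j Hjk). destruct (HP j) as [_ [? _]]. lra. }
  set (E := fun z => exists k, z = fst (sq k)).
  destruct (completeness E) as [m [Hub Hlub]].
  { exists x. intros z [k ->]. destruct (HP k) as [_ [? ?]]. lra. }
  { exists a. exists 0%nat. reflexivity. }
  assert (Hm1 : forall k, fst (sq k) <= m) by (intros k; apply Hub; exists k; reflexivity).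
  assert (Hm2 : forall k, m <= snd (sq k)).
  { intros k. apply Hlub. intros z [j ->]. apply Cross. }
  assert (Hma : a <= m /\ m <= x) by (split; [apply (Hm1 0%nat)| apply (Hm2 0%nat)]).
  pose proof (Hf m (HS m Hma)) as Hfm.
  destruct (archimed_cor1 (f m) Hfm) as [N [HN1 HN2]].
  destruct (HQk N) as [_ [_ [_ Hlt]]].
  specialize (Hlt m (conj (Hm1 (S N)) (Hm2 (S N)))).
  assert (/ (INR N + 1) <= / INR N).
  { apply Rinv_le_contravar; [apply lt_0_INR; lia| lra]. }
  lra.
Qed.

Lemma supp_near (a : R) (ch : Rbar) : Rbar_lt a ch -> forall d, 0 < d -> exists x1, in_supp a ch x1 /\ a < x1 /\ x1 < a + d.
Proof.
  intros Hch d Hd. destruct ch as [b| |]; simpl in Hch.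
  - exists (a + Rmin d (b - a) / 2). pose proof (Rmin_l d (b-a)). pose proof (Rmin_r d (b-a)).
    assert (0 < Rmin d (b - a)) by (apply Rmin_glb_lt; lra).
    split; [split; simpl; lra| lra].
  - exists (a + d/2). split; [split; simpl; auto; lra| lra].
  - contradiction.
Qed.

Lemma F_small_near (a : R) (ch : Rbar) F f : Rbar_lt a ch -> (forall x, in_supp a ch x -> is_RInt f a x (F x)) ->
  (forall x, in_supp a ch x -> 0 < f x) ->
  forall d, 0 < d -> exists eta, 0 < eta /\ forall x, in_supp a ch x -> F x < eta -> x < a + d.
Proof.
  intros Hch HF Hf d Hd. destruct (supp_near a ch Hch d Hd) as [x1 [Hx1 [H1 H2]]].
  exists (F x1). split; [apply (F_pos a ch F f); auto|].
  intros x Hx HFx. apply Rnot_le_lt. intros Hle.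
  pose proof (F_mono a ch F f Hch HF Hf x1 x Hx1 Hx ltac:(lra)). lra.
Qed.

Lemma G_small (a : R) (ch : Rbar) F f : Rbar_lt a ch -> (forall x, in_supp a ch x -> is_RInt f a x (F x)) ->
  (forall x, in_supp a ch x -> 0 < f x) ->
  (forall x y, in_supp a ch x -> in_supp a ch y -> x <= y -> F x / f x <= F y / f y) ->
  forall eps, 0 < eps -> exists d, 0 < d /\ forall x, in_supp a ch x -> x < a + d -> F x / f x < eps.
Proof.
  intros Hch HF Hf Hreg eps Heps. apply NNPP. intros Hn.
  assert (HH : forall d, 0 < d -> exists x, in_supp a ch x /\ x < a + d /\ eps <= F x / f x).
  { intros d Hd. apply NNPP. intros Hn2. apply Hn. exists d. split; auto.
    intros x Hx Hxd. apply Rnot_le_lt. intros Hle. apply Hn2. exists x. auto. }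
  pose proof (F_at_a a ch F f Hch HF) as Fa.
  assert (Ga : F a / f a = 0) by (rewrite Fa; unfold Rdiv; ring).
  destruct (HH (eps / 2) ltac:(lra)) as [y [Hy [Hy1 Hy2]]].
  assert (Hay : a < y).
  { destruct (proj1 Hy) as [H|H]; auto. subst y. lra. }
  assert (Ht : forall t, a < t < y -> f t <= F y / eps).
  { intros t Ht. assert (Hts : in_supp a ch t) by (apply (supp_conv a ch a y t); auto; [apply supp_a; auto|lra]).
    destruct (HH (t - a) ltac:(lra)) as [x' [Hx' [Hx'1 Hx'2]]].
    pose proof (Hreg x' t Hx' Hts ltac:(lra)) as Hr.
    pose proof (Hf t Hts) as Hft.
    assert (eps * f t <= F t).
    { assert (eps <= F t / f t) by lra.
      apply (Rmult_le_compat_r (f t)) in H; [|lra]. unfold Rdiv in H.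
      rewrite Rmult_assoc, Rinv_l in H by lra. lra. }
    pose proof (F_mono a ch F f Hch HF Hf t y Hts Hy ltac:(lra)).
    apply (Rmult_le_reg_l eps); [lra|]. unfold Rdiv. rewrite <- Rmult_assoc.
    rewrite (Rmult_comm eps (F y)), Rmult_assoc, Rinv_r by lra. lra. }
  assert (HI : F y <= scal (y - a) (F y / eps)).
  { pose proof (is_RInt_const a y (F y / eps)) as Hc. pose proof (HF y Hy) as Hy'.
    apply (is_RInt_le f (fun _ => F y / eps) a y); auto. lra. }
  unfold scal in HI; simpl in HI; unfold mult in HI; simpl in HI.
  assert (Hpos : 0 < F y) by (apply (F_pos a ch F f); auto).
  assert ((y - a) * (F y / eps) <= F y / 2).
  { unfold Rdiv. assert (0 < / eps) by (apply Rinv_0_lt_compat; lra).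
    assert ((y - a) * / eps <= / 2).
    { apply (Rmult_le_reg_l eps); [lra|]. rewrite <- Rmult_assoc, (Rmult_comm eps (y - a)), Rmult_assoc, Rinv_r by lra. lra. }
    nra. }
  lra.
Qed.

Definition gfun (x : R) : R := (1 - exp (- x)) / x.

Lemma gfun_decr x y : 0 < x -> x < y -> gfun y < gfun x.
Proof.
  intros Hx Hxy.
  assert (H : (fun z => - gfun z) x < (fun z => - gfun z) y); [|simpl in H; lra].
  apply (incr_function (fun z => - gfun z) (Finite 0) p_infty
    (fun z => (1 - exp (- z) - z * exp (- z)) / (z * z))); simpl; auto.
  - intros z Hz _. unfold gfun. auto_derive; [lra|]. field. lra.
  - intros z Hz _. apply Rlt_gt. unfold Rdiv. apply Rmult_lt_0_compat; [|apply Rinv_0_lt_compat; nra].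
    pose proof (exp_ineq1 z ltac:(lra)).
    assert (exp (- z) * exp z = 1) by (rewrite <- exp_plus, Rplus_opp_l, exp_0; reflexivity).
    pose proof (exp_pos (- z)). nra.
Qed.

Lemma gfun_lt1 x : 0 < x -> gfun x < 1.
Proof.
  intros Hx. unfold gfun. pose proof (exp_ineq1 (- x) ltac:(lra)).
  apply (Rmult_lt_reg_r x); [lra|]. unfold Rdiv. rewrite Rmult_assoc, Rinv_l by lra. lra.
Qed.

Lemma gfun_pos x : 0 < x -> 0 < gfun x.
Proof.
  intros Hx. unfold gfun. apply Rdiv_lt_0_compat; [|lra].
  assert (exp (- x) < 1) by (rewrite <- exp_0; apply exp_increasing; lra). lra.
Qed.

Lemma pos_fixed_point a vbar : 0 < a -> a < vbar ->
  exists z, 0 < z /\ vbar * (1 - exp (- z)) / a = z.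
Proof.
  intros Ha Hv. set (phi := fun k => k - vbar * (1 - exp (- k)) / a).
  set (r := vbar / a). assert (Hr : 1 < r).
  { unfold r. apply (Rmult_lt_reg_r a); [lra|]. unfold Rdiv. rewrite Rmult_assoc, Rinv_l by lra. lra. }
  set (k0 := (r - 1) / 2).
  assert (Hcont : continuity phi).
  { intros x. apply continuity_pt_filterlim. apply (ex_derive_continuous phi).
    unfold phi. auto_derive. lra. }
  assert (H1 : phi k0 < 0).
  { unfold phi. assert (0 < k0) by (unfold k0; lra).
    pose proof (exp_ineq1_le k0).
    assert (exp (- k0) * exp k0 = 1) by (rewrite <- exp_plus, Rplus_opp_l, exp_0; reflexivity).
    pose proof (exp_pos (- k0)).
    assert (Hl : k0 / (1 + k0) <= 1 - exp (- k0)).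
    { apply (Rmult_le_reg_r (1 + k0)); [lra|]. unfold Rdiv. rewrite Rmult_assoc, Rinv_l by lra. nra. }
    assert (vbar * (1 - exp (- k0)) / a = r * (1 - exp (- k0))) by (unfold r; field; lra).
    rewrite H3.
    assert (r * (k0 / (1 + k0)) > k0).
    { unfold k0. apply Rlt_gt. apply (Rmult_lt_reg_r (1 + (r-1)/2)); [lra|].
      unfold Rdiv. field_simplify; [|lra]. nra. }
    assert (r * (k0 / (1 + k0)) <= r * (1 - exp (- k0))) by (apply Rmult_le_compat_l; lra).
    lra. }
  assert (H2 : 0 < phi r).
  { unfold phi. pose proof (exp_pos (- r)).
    assert (vbar * (1 - exp (- r)) / a = r * (1 - exp (- r))) by (unfold r; field; lra).
    rewrite H0. nra. }
  assert (Hk0 : k0 < r) by (unfold k0; lra).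
  destruct (IVT phi k0 r Hcont Hk0 H1 H2) as [z [Hz1 Hz2]].
  exists z. split; [unfold k0 in Hz1; lra|]. unfold phi in Hz2. lra.
Qed.

Lemma ka_pos_iff (a vbar ka : R) : 0 < a -> a <= vbar ->
  (0 <= ka /\ vbar * (1 - exp (- ka)) / a = ka /\
     (forall k, 0 <= k -> vbar * (1 - exp (- k)) / a = k -> k <= ka)) ->
  (0 < ka -> a < vbar /\ vbar * gfun ka = a) /\ (ka = 0 -> vbar = a).
Proof.
  intros Ha Hva [Hk1 [Hk2 Hk3]]. split.
  - intros Hk. assert (Hg : vbar * gfun ka = a).
    { unfold gfun. apply (Rmult_eq_reg_r ka); [|lra]. unfold Rdiv.
      rewrite Rmult_assoc, Rmult_assoc, Rinv_l, Rmult_1_r by lra.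
      apply (Rmult_eq_reg_r (/ a)); [|apply Rinv_neq_0_compat; lra].
      rewrite <- Hk2 at 2. field. lra. }
    split; auto. destruct Hva as [Hva|Hva]; auto. subst vbar.
    pose proof (gfun_lt1 ka Hk). nra.
  - intros Hk. destruct Hva as [Hva|Hva]; auto.
    destruct (pos_fixed_point a vbar Ha Hva) as [z [Hz1 Hz2]].
    specialize (Hk3 z ltac:(lra) Hz2). lra.
Qed.


Lemma INR_large (r : R) : exists N, forall n, (N <= n)%nat -> r < INR n.
Proof.
  destruct (archimed r) as [H1 _]. exists (Z.to_nat (up r)). intros n Hn.
  destruct (Z_lt_le_dec (up r) 0) as [Hz|Hz].
  - pose proof (pos_INR n). apply IZR_lt in Hz. lra.
  - apply le_INR in Hn. rewrite INR_IZR_INZ, Z2Nat.id in Hn by lia. lra.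
Qed.

Lemma ca_facts (a : R) (ch : Rbar) F f vbar c n : Rbar_lt a ch ->
  (forall x, in_supp a ch x -> is_RInt f a x (F x)) ->
  (forall x, in_supp a ch x -> 0 < f x) -> is_lim F ch 1 -> 0 < a -> 0 < vbar ->
  (1 <= n)%nat -> in_supp a ch c -> vbar * Phi n F c 1 = c ->
  0 <= INR n * F c /\ INR n * F c <= vbar / a /\
  (INR n * F c = 0 -> c = vbar) /\
  (0 < INR n * F c -> vbar * gfun (INR n * F c) <= c) /\
  (0 < INR n * F c -> c <= vbar * gfun (INR n * F c) + vbar * (INR n * F c) / INR n).
Proof.
  intros Hch HF Hf Hlim Ha Hv Hn Hc Heq.
  pose proof (F_nonneg a ch F f Hch HF Hf c Hc) as Hp0.
  pose proof (F_le1 a ch F f Hch HF Hf Hlim c Hc) as Hp1.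
  set (p := F c) in *. set (k := INR n * p).
  assert (Hn0 : 0 < INR n) by (apply lt_0_INR; lia).
  assert (Hk0 : 0 <= k) by (unfold k; apply Rmult_le_pos; lra).
  pose proof (Phi_id n F c Hn) as Hid. fold p in Hid.
  assert (HI : c * k = vbar * (1 - (1 - p) ^ n)).
  { rewrite <- Hid. transitivity ((vbar * Phi n F c 1) * k); [rewrite Heq; reflexivity|]. unfold k. ring. }
  destruct (pow_exp_bounds p n ltac:(lra)) as [Hb1 Hb2].
  replace (INR n * p) with k in Hb1, Hb2 by reflexivity.
  pose proof (pow_le1 (1 - p) n ltac:(lra)) as Hpw.
  pose proof (proj1 Hc) as Hac.
  split; [auto|]. split.
  { apply (Rmult_le_reg_l a); [lra|]. unfold Rdiv.
    rewrite <- Rmult_assoc, (Rmult_comm a vbar), Rmult_assoc, Rinv_r, Rmult_1_r by lra.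
    assert (a * k <= c * k) by (apply Rmult_le_compat_r; lra). nra. }
  split.
  { intros Hk. assert (p = 0) by (unfold k in Hk; apply Rmult_integral in Hk; destruct Hk; lra).
    rewrite <- Heq. rewrite Phi_zero by auto. ring. }
  assert (Hgk : forall k', 0 < k' -> gfun k' = (1 - exp (- k')) / k') by reflexivity.
  split.
  { intros Hk. rewrite Hgk by auto. apply (Rmult_le_reg_r k); [auto|]. rewrite HI.
    unfold Rdiv. rewrite Rmult_assoc, Rmult_assoc, Rinv_l, Rmult_1_r by lra.
    apply Rmult_le_compat_l; lra. }
  { intros Hk. rewrite Hgk by auto. apply (Rmult_le_reg_r k); [auto|]. rewrite HI.
    assert (E1 : (vbar * ((1 - exp (- k)) / k) + vbar * k / INR n) * k
       = vbar * (1 - exp (- k)) + vbar * (INR n * (p * p))).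
    { assert (p <> 0) by (intro Hp; unfold k in Hk; rewrite Hp in Hk; lra).
      unfold k. field. repeat split; auto; lra. }
    rewrite E1. nra. }
Qed.

Lemma mul_div_lt r e x : 0 < e -> r / e < x -> r < e * x.
Proof. intros He H. replace r with (e * (r / e)) by (field; lra). apply Rmult_lt_compat_l; auto. Qed.

Lemma CA_lim (a : R) (ch : Rbar) F f vbar ka (ca : nat -> R) : Rbar_lt a ch ->
  (forall x, in_supp a ch x -> is_RInt f a x (F x)) ->
  (forall x, in_supp a ch x -> 0 < f x) -> is_lim F ch 1 -> 0 < a -> 0 < vbar -> a <= vbar ->
  (exists N, forall n, (N <= n)%nat -> (1 <= n)%nat ->
     in_supp a ch (ca n) /\ vbar * Phi n F (ca n) 1 = ca n /\
     (forall c, in_supp a ch c -> vbar * Phi n F c 1 = c -> c = ca n)) ->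
  (0 <= ka /\ vbar * (1 - exp (- ka)) / a = ka /\
     (forall k, 0 <= k -> vbar * (1 - exp (- k)) / a = k -> k <= ka)) ->
  is_lim_seq (fun n => INR n * F (ca n)) ka.
Proof.
  intros Hch HF Hf Hlim Ha Hv Hva [N0 HN0] Hka.
  pose proof (ka_pos_iff a vbar ka Ha Hva Hka) as [Hkp Hk0].
  set (K := vbar / a).
  assert (HK : 0 < K) by (unfold K; apply Rdiv_lt_0_compat; lra).
  assert (Fa : forall n, (Nat.max N0 1 <= n)%nat ->
     in_supp a ch (ca n) /\
     0 <= INR n * F (ca n) /\ INR n * F (ca n) <= K /\
     (INR n * F (ca n) = 0 -> ca n = vbar) /\
     (0 < INR n * F (ca n) -> vbar * gfun (INR n * F (ca n)) <= ca n) /\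
     (0 < INR n * F (ca n) -> ca n <= vbar * gfun (INR n * F (ca n)) + vbar * (INR n * F (ca n)) / INR n)).
  { intros n Hn. destruct (HN0 n ltac:(lia) ltac:(lia)) as [Hs [He _]].
    split; auto. apply (ca_facts a ch F f vbar (ca n) n); auto; lia. }
  assert (Cto : forall d, 0 < d -> exists N, forall n, (N <= n)%nat -> ca n < a + d).
  { intros d Hd. destruct (F_small_near a ch F f Hch HF Hf d Hd) as [eta [Heta Heta2]].
    destruct (INR_large (K / eta)) as [N1 HN1].
    exists (Nat.max (Nat.max N0 1) N1). intros n Hn.
    destruct (Fa n ltac:(lia)) as [Hs [Hk1 [Hk2 _]]].
    apply Heta2; auto.
    specialize (HN1 n ltac:(lia)).
    assert (Hn0 : 0 < INR n) by (apply lt_0_INR; lia).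
    assert (K < eta * INR n).
    { apply mul_div_lt; auto. }
    nra. }
  apply is_lim_seq_spec. intros eps. destruct eps as [eps Heps]. simpl.
  assert (Up : exists N, forall n, (N <= n)%nat -> INR n * F (ca n) < ka + eps).
  { set (eta := a - vbar * gfun (ka + eps)).
    assert (Heta : 0 < eta).
    { unfold eta. destruct (proj1 Hka) as [Hkpos|Hkz].
      - destruct (Hkp Hkpos) as [_ Hg]. pose proof (gfun_decr ka (ka + eps) Hkpos ltac:(lra)). nra.
      - rewrite <- Hkz, Rplus_0_l. rewrite (Hk0 (eq_sym Hkz)). pose proof (gfun_lt1 eps Heps). nra. }
    destruct (INR_large (vbar * K / eta)) as [N1 HN1].
    exists (Nat.max (Nat.max N0 1) N1). intros n Hn.
    destruct (Fa n ltac:(lia)) as [Hs [Hk1 [Hk2 [_ [_ Hup]]]]].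
    apply Rnot_le_lt. intros Hge.
    assert (Hkp' : 0 < INR n * F (ca n)) by lra.
    specialize (Hup Hkp').
    assert (Hgle : gfun (INR n * F (ca n)) <= gfun (ka + eps)).
    { destruct Hge as [Hgt|Heq]; [left; apply gfun_decr; lra| rewrite Heq; lra]. }
    specialize (HN1 n ltac:(lia)).
    assert (Hn0 : 0 < INR n) by (apply lt_0_INR; lia).
    assert (vbar * K < eta * INR n).
    { apply mul_div_lt; auto. }
    assert (vbar * (INR n * F (ca n)) / INR n < eta).
    { apply (Rmult_lt_reg_r (INR n)); [lra|]. unfold Rdiv.
      rewrite Rmult_assoc, Rinv_l, Rmult_1_r by lra. nra. }
    pose proof (proj1 Hs). unfold eta in *. nra. }
  assert (Lo : exists N, forall n, (N <= n)%nat -> ka - eps < INR n * F (ca n)).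
  { destruct (Rlt_or_le (ka - eps) 0) as [Hneg|Hge].
    - exists (Nat.max N0 1). intros n Hn. destruct (Fa n Hn) as [_ [Hk1 _]]. lra.
    - assert (Hkpos : 0 < ka) by lra. destruct (Hkp Hkpos) as [Hva' Hg].
      assert (Hth : exists th, a < th /\ forall n, (Nat.max N0 1 <= n)%nat ->
                INR n * F (ca n) <= ka - eps -> th <= ca n).
      { destruct Hge as [Hp|Hz].
        - exists (Rmin vbar (vbar * gfun (ka - eps))). split.
          + apply Rmin_glb_lt; auto. pose proof (gfun_decr (ka - eps) ka Hp ltac:(lra)). nra.
          + intros n Hn Hle. destruct (Fa n Hn) as [_ [Hk1 [_ [Hz [Hlo _]]]]].
            destruct Hk1 as [Hk1|Hk1].
            * specialize (Hlo Hk1).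
              assert (gfun (ka - eps) <= gfun (INR n * F (ca n))).
              { destruct Hle as [Hlt|Heq]; [left; apply gfun_decr; lra| rewrite Heq; lra]. }
              pose proof (Rmin_r vbar (vbar * gfun (ka - eps))). nra.
            * rewrite Hz by auto. apply Rmin_l.
        - exists vbar. split; auto. intros n Hn Hle. destruct (Fa n Hn) as [_ [Hk1 [_ [Hz' _]]]].
          rewrite Hz'; [lra|]. lra. }
      destruct Hth as [th [Hth1 Hth2]].
      destruct (Cto (th - a) ltac:(lra)) as [N1 HN1].
      exists (Nat.max (Nat.max N0 1) N1). intros n Hn. apply Rnot_le_lt. intros Hle.
      specialize (Hth2 n ltac:(lia) Hle). specialize (HN1 n ltac:(lia)). lra. }
  destruct Up as [N1 HN1]. destruct Lo as [N2 HN2].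
  exists (Nat.max N1 N2). intros n Hn. specialize (HN1 n ltac:(lia)). specialize (HN2 n ltac:(lia)).
  apply Rabs_def1; lra.
Qed.

Definition hfun (L : nat) (w mu q : nat -> R) (k : R) : R :=
  sumL L (fun l => w l * mu l * q l * exp (- q l * k)).

Lemma hfun_le L w mu q x y : (forall l, (l < L)%nat -> 0 < mu l <= 1 /\ 0 < q l <= 1 /\ 0 <= w l) ->
  x <= y -> hfun L w mu q y <= hfun L w mu q x.
Proof.
  intros Hb Hxy. apply sumL_le. intros l Hl. destruct (Hb l Hl) as [[? ?] [[? ?] ?]].
  apply Rmult_le_compat_l; [apply Rmult_le_pos; [apply Rmult_le_pos|]; lra|].
  apply exp_le. nra.
Qed.

Lemma hfun_lt L w mu q x y : (forall l, (l < L)%nat -> 0 < mu l <= 1 /\ 0 < q l <= 1 /\ 0 <= w l) ->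
  (exists l, (l < L)%nat /\ 0 < w l * mu l * q l) ->
  x < y -> hfun L w mu q y < hfun L w mu q x.
Proof.
  intros Hb [l0 [Hl0 Hpos]] Hxy. apply sumL_lt.
  - intros l Hl. destruct (Hb l Hl) as [[? ?] [[? ?] ?]].
    apply Rmult_le_compat_l; [apply Rmult_le_pos; [apply Rmult_le_pos|]; lra|].
    apply exp_le. nra.
  - exists l0. split; auto. destruct (Hb l0 Hl0) as [[? ?] [[? ?] ?]].
    apply Rmult_lt_compat_l; auto. apply exp_increasing. nra.
Qed.

Lemma ct_facts (a : R) (ch : Rbar) F f L w mu q c n : Rbar_lt a ch ->
  (forall x, in_supp a ch x -> is_RInt f a x (F x)) ->
  (forall x, in_supp a ch x -> 0 < f x) -> is_lim F ch 1 ->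
  (forall l, (l < L)%nat -> 0 < mu l <= 1 /\ 0 < q l <= 1 /\ 0 <= w l) ->
  (2 <= n)%nat -> in_supp a ch c -> Omega L w mu q F f n c = c ->
  0 <= F c <= 1 /\ a <= c + F c / f c /\
  c + F c / f c <= hfun L w mu q (INR (n - 1) * F c) /\
  hfun L w mu q (INR (n - 1) * F c) - sumL L (fun l => w l * mu l * q l) * (INR (n - 1) * (F c * F c))
    <= c + F c / f c.
Proof.
  intros Hch HF Hf Hlim Hb Hn Hc Heq.
  pose proof (F_nonneg a ch F f Hch HF Hf c Hc) as Hp0.
  pose proof (F_le1 a ch F f Hch HF Hf Hlim c Hc) as Hp1.
  pose proof (Hf c Hc) as Hfc.
  assert (HG : 0 <= F c / f c) by (apply Rdiv_le_0_compat; lra).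
  unfold Omega in Heq.
  assert (HS : sumL L (fun l => w l * mu l * q l * (1 - q l * F c) ^ (n - 1)) = c + F c / f c) by lra.
  split; [lra|]. split; [pose proof (proj1 Hc); lra|]. rewrite <- HS. split.
  - apply sumL_le. intros l Hl. destruct (Hb l Hl) as [[? ?] [[? ?] ?]].
    apply Rmult_le_compat_l; [apply Rmult_le_pos; [apply Rmult_le_pos|]; lra|].
    destruct (pow_exp_bounds (q l * F c) (n - 1) ltac:(split; nra)) as [_ Hu2].
    replace (- q l * (INR (n - 1) * F c)) with (- (INR (n - 1) * (q l * F c))) by ring. exact Hu2.
  - unfold hfun.
    assert (sumL L (fun k => w k * mu k * q k * exp (- q k * (INR (n - 1) * F c)) +
      (- (INR (n - 1) * (F c * F c))) * (w k * mu k * q k)) <=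
      sumL L (fun l => w l * mu l * q l * (1 - q l * F c) ^ (n - 1))).
    { apply sumL_le. intros l Hl. destruct (Hb l Hl) as [[? ?] [[? ?] ?]].
      destruct (pow_exp_bounds (q l * F c) (n - 1) ltac:(split; nra)) as [Hu1 _].
      replace (- q l * (INR (n - 1) * F c)) with (- (INR (n - 1) * (q l * F c))) by ring.
      assert (Hw : 0 <= w l * mu l * q l) by (apply Rmult_le_pos; [apply Rmult_le_pos|]; lra).
      pose proof (pos_INR (n - 1)).
      assert (INR (n - 1) * (q l * F c * (q l * F c)) <= INR (n - 1) * (F c * F c)).
      { apply Rmult_le_compat_l; auto. assert (0 <= q l * F c <= F c) by (split; nra). nra. }
      assert (w l * mu l * q l * (exp (- (INR (n - 1) * (q l * F c))) - INR (n - 1) * (F c * F c))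
        <= w l * mu l * q l * (1 - q l * F c) ^ (n - 1)).
      { apply Rmult_le_compat_l; auto. lra. }
      lra. }
    rewrite sumL_plus, sumL_scal in H. lra.
Qed.

Lemma CT_lim (a : R) (ch : Rbar) F f L w mu q kt (ct : nat -> R) : Rbar_lt a ch ->
  (forall x, in_supp a ch x -> is_RInt f a x (F x)) ->
  (forall x, in_supp a ch x -> 0 < f x) -> is_lim F ch 1 ->
  (forall x y, in_supp a ch x -> in_supp a ch y -> x <= y -> F x / f x <= F y / f y) ->
  (forall l, (l < L)%nat -> 0 < mu l <= 1 /\ 0 < q l <= 1 /\ 0 <= w l) ->
  0 < a -> a <= sumL L (fun l => w l * mu l * q l) ->
  (exists N, forall n, (N <= n)%nat -> (1 <= n)%nat ->
     in_supp a ch (ct n) /\ Omega L w mu q F f n (ct n) = ct n /\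
     (forall c, in_supp a ch c -> Omega L w mu q F f n c = c -> c = ct n)) ->
  (0 <= kt /\
     sumL L (fun l => w l * mu l * q l * exp (- q l * kt)) - a = 0 /\
     (forall k, 0 <= k ->
        sumL L (fun l => w l * mu l * q l * exp (- q l * k)) - a = 0 -> k = kt)) ->
  is_lim_seq (fun n => INR n * F (ct n)) kt.
Proof.
  intros Hch HF Hf Hlim Hreg Hb Ha Hsum [N0 HN0] [Hkt0 [Hkt1 _]].
  assert (Hhkt : hfun L w mu q kt = a) by (unfold hfun; lra).
  destruct (sumL_pos_ex L (fun l => w l * mu l * q l) ltac:(lra)) as [l0 Hl0].
  assert (Hex : exists l, (l < L)%nat /\ 0 < w l * mu l * q l) by (exists l0; exact Hl0).
  set (W := sumL L (fun l => w l * mu l * q l)) in *.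
  set (M0 := Nat.max N0 2).
  assert (Fa : forall n, (M0 <= n)%nat ->
     in_supp a ch (ct n) /\ 0 <= F (ct n) <= 1 /\ a <= ct n + F (ct n) / f (ct n) /\
     ct n + F (ct n) / f (ct n) <= hfun L w mu q (INR (n - 1) * F (ct n)) /\
     hfun L w mu q (INR (n - 1) * F (ct n)) - W * (INR (n - 1) * (F (ct n) * F (ct n)))
       <= ct n + F (ct n) / f (ct n)).
  { intros n Hn. destruct (HN0 n ltac:(lia) ltac:(lia)) as [Hs [He _]].
    split; auto. apply (ct_facts a ch F f L w mu q (ct n) n); auto; lia. }
  assert (Hn1 : forall n, (M0 <= n)%nat -> 0 < INR (n - 1) /\ INR (n - 1) = INR n - 1).
  { intros n Hn. split; [apply lt_0_INR; lia| rewrite minus_INR by lia; simpl; lra]. }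
  assert (Kup : forall n, (M0 <= n)%nat -> INR (n - 1) * F (ct n) <= kt).
  { intros n Hn. destruct (Fa n Hn) as [_ [_ [H1 [H2 _]]]]. apply Rnot_lt_le. intros Hlt.
    pose proof (hfun_lt L w mu q kt _ Hb Hex Hlt). lra. }
  assert (Psmall : forall r, 0 < r -> exists N, forall n, (N <= n)%nat -> (M0 <= n)%nat /\ F (ct n) < r).
  { intros r Hr. destruct (INR_large (kt / r + 1)) as [N1 HN1].
    exists (Nat.max M0 N1). intros n Hn. split; [lia|].
    specialize (HN1 n ltac:(lia)). destruct (Hn1 n ltac:(lia)) as [Hp He].
    pose proof (Kup n ltac:(lia)).
    assert (kt < r * INR (n - 1)) by (apply mul_div_lt; auto; lra).
    apply (Rmult_lt_reg_l (INR (n - 1))); auto. nra. }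
  assert (Cto : forall d, 0 < d -> exists N, forall n, (N <= n)%nat -> (M0 <= n)%nat /\ ct n < a + d).
  { intros d Hd. destruct (F_small_near a ch F f Hch HF Hf d Hd) as [eta [Heta Heta2]].
    destruct (Psmall eta Heta) as [N1 HN1]. exists N1. intros n Hn.
    destruct (HN1 n Hn) as [Hm Hp]. split; auto. apply Heta2; auto. apply (Fa n Hm). }
  apply is_lim_seq_spec. intros eps. destruct eps as [eps Heps]. simpl.
  set (e := eps / 2).
  assert (Lo : exists N, forall n, (N <= n)%nat -> (M0 <= n)%nat /\ kt - e < INR (n - 1) * F (ct n)).
  { destruct (Rlt_or_le (kt - e) 0) as [Hneg|Hge].
    - exists M0. intros n Hn. split; auto. destruct (Fa n Hn) as [_ [Hp _]].
      destruct (Hn1 n Hn). nra.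
    - set (eta := hfun L w mu q (kt - e) - a).
      assert (Heta : 0 < eta) by (unfold eta; pose proof (hfun_lt L w mu q (kt - e) kt Hb Hex ltac:(unfold e; lra)); lra).
      destruct (G_small a ch F f Hch HF Hf Hreg (eta / 3) ltac:(lra)) as [dl [Hdl HG]].
      destruct (Cto (Rmin dl (eta / 3)) ltac:(apply Rmin_glb_lt; lra)) as [N1 HN1].
      assert (HW : 0 <= W) by lra.
      destruct (Psmall (eta / (3 * (W * kt + 1))) ltac:(apply Rdiv_lt_0_compat; nra)) as [N2 HN2].
      exists (Nat.max N1 N2). intros n Hn. destruct (HN1 n ltac:(lia)) as [Hm Hc].
      split; auto. apply Rnot_le_lt. intros Hle.
      destruct (Fa n Hm) as [Hs [Hp [_ [_ Hlow]]]].
      pose proof (hfun_le L w mu q _ _ Hb Hle) as Hh.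
      pose proof (Rmin_l dl (eta / 3)). pose proof (Rmin_r dl (eta / 3)).
      pose proof (HG (ct n) Hs ltac:(lra)) as HGn.
      destruct (HN2 n ltac:(lia)) as [_ Hps].
      pose proof (Kup n Hm) as Hk.
      assert (Hsq : W * (INR (n - 1) * (F (ct n) * F (ct n))) < eta / 3).
      { assert (W * (INR (n - 1) * (F (ct n) * F (ct n))) <= (W * kt) * F (ct n)).
        { replace (W * (INR (n - 1) * (F (ct n) * F (ct n)))) with (W * F (ct n) * (INR (n - 1) * F (ct n))) by ring.
          replace (W * kt * F (ct n)) with (W * F (ct n) * kt) by ring.
          apply Rmult_le_compat_l; auto. nra. }
        assert (F (ct n) * (3 * (W * kt + 1)) < eta).
        { apply (Rmult_lt_reg_r (/ (3 * (W * kt + 1)))); [apply Rinv_0_lt_compat; nra|].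
          rewrite Rmult_assoc, Rinv_r, Rmult_1_r by nra. exact Hps. }
        nra. }
      unfold eta in *. lra. }
  destruct Lo as [N1 HN1]. destruct (Psmall e ltac:(unfold e; lra)) as [N2 HN2].
  exists (Nat.max N1 N2). intros n Hn. destruct (HN1 n ltac:(lia)) as [Hm Hlo].
  destruct (HN2 n ltac:(lia)) as [_ Hp]. pose proof (Kup n Hm) as Hk.
  destruct (Hn1 n Hm) as [_ He]. destruct (Fa n Hm) as [_ [Hp01 _]].
  assert (INR n * F (ct n) = INR (n - 1) * F (ct n) + F (ct n)) by (rewrite He; ring).
  apply Rabs_def1; unfold e in *; lra.
Qed.

Lemma is_lim_seq_Rmin (u v : nat -> R) (lu lv : R) :
  is_lim_seq u lu -> is_lim_seq v lv -> is_lim_seq (fun n => Rmin (u n) (v n)) (Rmin lu lv).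
Proof.
  intros Hu Hv. apply is_lim_seq_spec in Hu. apply is_lim_seq_spec in Hv.
  apply is_lim_seq_spec. intros eps.
  destruct (Hu eps) as [N1 H1]. destruct (Hv eps) as [N2 H2].
  exists (Nat.max N1 N2). intros n Hn. specialize (H1 n ltac:(lia)). specialize (H2 n ltac:(lia)).
  apply Rabs_def2 in H1. apply Rabs_def2 in H2. apply Rabs_def1;
  unfold Rmin; destruct (Rle_dec (u n) (v n)); destruct (Rle_dec lu lv); lra.
Qed.
Theorem lemma7
  (* bugs *)
  (L : nat) (w mu q : nat -> R)
  (Hbugs : forall l, (l < L)%nat -> 0 < mu l <= 1 /\ 0 < q l <= 1 /\ 0 <= w l)
  (* cost distribution *)
  (c_lo : R) (c_hi : Rbar) (F f : R -> R)
  (Hclo : 0 < c_lo) (Hchi : Rbar_lt (Finite c_lo) c_hi)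
  (HF_below : forall x, x < c_lo -> F x = 0)
  (HF_dens : forall x, in_supp c_lo c_hi x -> is_RInt f c_lo x (F x))
  (HF_above : forall x, Rbar_lt c_hi (Finite x) -> F x = 1)
  (HF_mass : is_lim F c_hi 1)
  (Hf_pos : forall x, in_supp c_lo c_hi x -> 0 < f x)
  (Hreg : forall x y, in_supp c_lo c_hi x -> in_supp c_lo c_hi y -> x <= y ->
            F x / f x <= F y / f y)
  (* budget *)
  (vbar : R) (Hv : 0 < vbar) (Hvc : c_lo <= vbar)
  (Hsum : c_lo <= sumL L (fun l => w l * mu l * q l))
  (* c~_n : the unique fixed point of Omega_n *)
  (ct : nat -> R)
  (Hct : exists N, forall n, (N <= n)%nat -> (1 <= n)%nat ->
     in_supp c_lo c_hi (ct n) /\ Omega L w mu q F f n (ct n) = ct n /\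
     (forall c, in_supp c_lo c_hi c -> Omega L w mu q F f n c = c -> c = ct n))
  (* c_{a,n}(vbar) : the unique fixed point of c |-> vbar * Phi_n(c; 1) *)
  (ca : nat -> R)
  (Hca : exists N, forall n, (N <= n)%nat -> (1 <= n)%nat ->
     in_supp c_lo c_hi (ca n) /\ vbar * Phi n F (ca n) 1 = ca n /\
     (forall c, in_supp c_lo c_hi c -> vbar * Phi n F c 1 = c -> c = ca n))
  (* kappa~ : the unique root in [0,oo) of sum_l w mu q e^{-q k} - c_lo *)
  (kt : R)
  (Hkt : 0 <= kt /\
     sumL L (fun l => w l * mu l * q l * exp (- q l * kt)) - c_lo = 0 /\
     (forall k, 0 <= k ->
        sumL L (fun l => w l * mu l * q l * exp (- q l * k)) - c_lo = 0 -> k = kt))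
  (* kappa_a(vbar) : the largest fixed point in [0,oo) of k |-> vbar (1 - e^{-k}) / c_lo *)
  (ka : R)
  (Hka : 0 <= ka /\ vbar * (1 - exp (- ka)) / c_lo = ka /\
     (forall k, 0 <= k -> vbar * (1 - exp (- k)) / c_lo = k -> k <= ka)) :
  is_lim_seq (fun n => INR n * F (Rmin (ct n) (ca n))) (Rmin kt ka).
Proof.
  pose proof (CT_lim c_lo c_hi F f L w mu q kt ct Hchi HF_dens Hf_pos HF_mass Hreg Hbugs Hclo Hsum Hct Hkt) as H1.
  pose proof (CA_lim c_lo c_hi F f vbar ka ca Hchi HF_dens Hf_pos HF_mass Hclo Hv Hvc Hca Hka) as H2.
  pose proof (is_lim_seq_Rmin _ _ _ _ H1 H2) as H3.
  apply (is_lim_seq_ext_loc (fun n => Rmin (INR n * F (ct n)) (INR n * F (ca n)))); [|exact H3].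
  destruct Hct as [N1 HN1]. destruct Hca as [N2 HN2].
  exists (Nat.max (Nat.max N1 N2) 1). intros n Hn.
  destruct (HN1 n ltac:(lia) ltac:(lia)) as [Hs1 _].
  destruct (HN2 n ltac:(lia) ltac:(lia)) as [Hs2 _].
  pose proof (pos_INR n) as Hn0.
  unfold Rmin at 2. destruct (Rle_dec (ct n) (ca n)) as [Hle|Hgt].
  - pose proof (F_mono c_lo c_hi F f Hchi HF_dens Hf_pos _ _ Hs1 Hs2 Hle).
    unfold Rmin. destruct (Rle_dec (INR n * F (ct n)) (INR n * F (ca n))); [reflexivity|].
    exfalso. apply n0. apply Rmult_le_compat_l; auto.
  - pose proof (F_mono c_lo c_hi F f Hchi HF_dens Hf_pos _ _ Hs2 Hs1 ltac:(lra)).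
    unfold Rmin. destruct (Rle_dec (INR n * F (ct n)) (INR n * F (ca n))) as [Hl|Hl]; [|reflexivity].
    assert (INR n * F (ca n) <= INR n * F (ct n)) by (apply Rmult_le_compat_l; auto). lra.
Qed.
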